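(* Let $C$ be an arbitrary quasi-copula and let $C^\sigma$ denote either of its reflections $C^\sigma(x,y)=y-C(1-x,y)$ or $C^\sigma(x,y)=x-C(x,1-y)$ (the same choice of reflection used throughout). Then $(C^\sigma)_M=(C_O)^\sigma$ and $(C^\sigma)_O=(C_M)^\sigma$.
   Context: For a quasi-copula $Q$ on $[0,1]^2$ and $\mathbf{x}=(x_1,x_2)\in[0,1]^2$ define the sets of (possibly degenerate) rectangles $[s_1,s_2]\times[t_1,t_2]\subseteq[0,1]^2$: $\mathcal{R}_\nearrow(\mathbf{x})$ those with southwest corner $\mathbf{x}$; $\mathcal{R}_\swarrow(\mathbf{x})$ those with northeast corner $\mathbf{x}$; $\mathcal{R}_\nwarrow(\mathbf{x})$ those with southeast corner $\mathbf{x}$; $\mathcal{R}_\searrow(\mathbf{x})$ those with northwest corner $\mathbf{x}$. With $V_Q([s_1,s_2]\times[t_1,t_2])=Q(s_1,t_1)+Q(s_2,t_2)-Q(s_2,t_1)-Q(s_1,t_2)$, the defects are $D^Q_{\bullet}(\mathbf{x})=\inf\{V_Q(R):R\in\mathcal{R}_\bullet(\mathbf{x})\}\le0$ for $\bullet\in\{\nearrow,\swarrow,\nwarrow,\searrow\}$, $D^Q_M=\min(D^Q_\nearrow,D^Q_\swarrow)$, $D^Q_O=\min(D^Q_\nwarrow,D^Q_\searrow)$, and $Q_M=Q-D^Q_M$, $Q_O=Q+D^Q_O$ (these are quasi-copulas with $Q_O\le Q\le Q_M$). A quasi-copula is a function $[0,1]^2\to\mathbb{R}$ that is grounded ($Q(x,0)=Q(0,y)=0$),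 has neutral element 1 ($Q(x,1)=x$, $Q(1,y)=y$), and has $V_Q(R)\ge0$ for every rectangle $R\subseteq[0,1]^2$ having a side on the boundary of $[0,1]^2$. *)

(* Defs.v *)
From Stdlib Require Import Reals Lra ClassicalEpsilon.
Open Scope R_scope.

Definition is_lower_bound (P : R -> Prop) (m : R) : Prop :=
  forall x, P x -> m <= x.
Definition is_glb (P : R -> Prop) (m : R) : Prop :=
  is_lower_bound P m /\ (forall b, is_lower_bound P b -> b <= m).
Definition Rinf (P : R -> Prop) : R :=
  epsilon (inhabits 0) (fun m => is_glb P m).

Definition in01 (x : R) : Prop := 0 <= x <= 1.

Definition VQ (Q : R -> R -> R) (s1 s2 t1 t2 : R) : R :=
  Q s1 t1 + Q s2 t2 - Q s2 t1 - Q s1 t2.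

Definition is_rect (s1 s2 t1 t2 : R) : Prop :=
  0 <= s1 /\ s1 <= s2 /\ s2 <= 1 /\ 0 <= t1 /\ t1 <= t2 /\ t2 <= 1.

Definition quasi_copula (Q : R -> R -> R) : Prop :=
  (forall x, in01 x -> Q x 0 = 0 /\ Q 0 x = 0) /\
  (forall x, in01 x -> Q x 1 = x /\ Q 1 x = x) /\
  (forall s1 s2 t1 t2, is_rect s1 s2 t1 t2 ->
     (s1 = 0 \/ s2 = 1 \/ t1 = 0 \/ t2 = 1) -> 0 <= VQ Q s1 s2 t1 t2).

Definition D_ne (Q : R -> R -> R) (x1 x2 : R) : R :=
  Rinf (fun v => exists s1 s2 t1 t2, is_rect s1 s2 t1 t2 /\
          s1 = x1 /\ t1 = x2 /\ v = VQ Q s1 s2 t1 t2).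
Definition D_sw (Q : R -> R -> R) (x1 x2 : R) : R :=
  Rinf (fun v => exists s1 s2 t1 t2, is_rect s1 s2 t1 t2 /\
          s2 = x1 /\ t2 = x2 /\ v = VQ Q s1 s2 t1 t2).
Definition D_nw (Q : R -> R -> R) (x1 x2 : R) : R :=
  Rinf (fun v => exists s1 s2 t1 t2, is_rect s1 s2 t1 t2 /\
          s2 = x1 /\ t1 = x2 /\ v = VQ Q s1 s2 t1 t2).
Definition D_se (Q : R -> R -> R) (x1 x2 : R) : R :=
  Rinf (fun v => exists s1 s2 t1 t2, is_rect s1 s2 t1 t2 /\
          s1 = x1 /\ t2 = x2 /\ v = VQ Q s1 s2 t1 t2).

Definition D_M (Q : R -> R -> R) (x1 x2 : R) : R := Rmin (D_ne Q x1 x2) (D_sw Q x1 x2).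
Definition D_O (Q : R -> R -> R) (x1 x2 : R) : R := Rmin (D_nw Q x1 x2) (D_se Q x1 x2).

Definition Q_M (Q : R -> R -> R) : R -> R -> R := fun x y => Q x y - D_M Q x y.
Definition Q_O (Q : R -> R -> R) : R -> R -> R := fun x y => Q x y + D_O Q x y.

Definition refl1 (C : R -> R -> R) : R -> R -> R := fun x y => y - C (1 - x) y.
Definition refl2 (C : R -> R -> R) : R -> R -> R := fun x y => x - C x (1 - y).

(* Main.v *)
Require Import Defs.
From Stdlib Require Import Reals Lra FunctionalExtensionality PropExtensionality.
Open Scope R_scope.

Lemma Rinf_ext (P P' : R -> Prop) : (forall v, P v <-> P' v) -> Rinf P = Rinf P'.
Proof.
  intro H. assert (P = P') as ->; [|reflexivity].
  apply functional_extensionality; intro v; apply propositional_extensionality; auto.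
Qed.

Lemma V1 C s1 s2 t1 t2 : VQ (refl1 C) s1 s2 t1 t2 = VQ C (1-s2) (1-s1) t1 t2.
Proof. unfold VQ, refl1. ring. Qed.
Lemma V2 C s1 s2 t1 t2 : VQ (refl2 C) s1 s2 t1 t2 = VQ C s1 s2 (1-t2) (1-t1).
Proof. unfold VQ, refl2. ring. Qed.

Lemma ne1 C x y : D_ne (refl1 C) x y = D_nw C (1-x) y.
Proof. unfold D_ne, D_nw. apply Rinf_ext; intro v; split;
  [ intros (s1 & s2 & t1 & t2 & Hr & E1 & E2 & Ev); rewrite V1 in Ev
  | intros (s1 & s2 & t1 & t2 & Hr & E1 & E2 & Ev) ];
  unfold is_rect in *;
  first
  [ exists (1-s2), (1-s1), t1, t2; rewrite ?V1; repeat split; try lra; rewrite Ev; f_equal; lra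
  | exists s1, s2, (1-t2), (1-t1); rewrite ?V1; repeat split; try lra; rewrite Ev; f_equal; lra ]. Qed.
Lemma sw1 C x y : D_sw (refl1 C) x y = D_se C (1-x) y.
Proof. unfold D_sw, D_se. apply Rinf_ext; intro v; split;
  [ intros (s1 & s2 & t1 & t2 & Hr & E1 & E2 & Ev); rewrite V1 in Ev
  | intros (s1 & s2 & t1 & t2 & Hr & E1 & E2 & Ev) ];
  unfold is_rect in *;
  first
  [ exists (1-s2), (1-s1), t1, t2; rewrite ?V1; repeat split; try lra; rewrite Ev; f_equal; lra
  | exists s1, s2, (1-t2), (1-t1); rewrite ?V1; repeat split; try lra; rewrite Ev; f_equal; lra ]. Qed.
Lemma nw1 C x y : D_nw (refl1 C) x y = D_ne C (1-x) y.
Proof. unfold D_nw, D_ne. apply Rinf_ext; intro v; split;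
  [ intros (s1 & s2 & t1 & t2 & Hr & E1 & E2 & Ev); rewrite V1 in Ev
  | intros (s1 & s2 & t1 & t2 & Hr & E1 & E2 & Ev) ];
  unfold is_rect in *;
  first
  [ exists (1-s2), (1-s1), t1, t2; rewrite ?V1; repeat split; try lra; rewrite Ev; f_equal; lra
  | exists s1, s2, (1-t2), (1-t1); rewrite ?V1; repeat split; try lra; rewrite Ev; f_equal; lra ]. Qed.
Lemma se1 C x y : D_se (refl1 C) x y = D_sw C (1-x) y.
Proof. unfold D_se, D_sw. apply Rinf_ext; intro v; split;
  [ intros (s1 & s2 & t1 & t2 & Hr & E1 & E2 & Ev); rewrite V1 in Ev
  | intros (s1 & s2 & t1 & t2 & Hr & E1 & E2 & Ev) ];
  unfold is_rect in *;
  first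
  [ exists (1-s2), (1-s1), t1, t2; rewrite ?V1; repeat split; try lra; rewrite Ev; f_equal; lra
  | exists s1, s2, (1-t2), (1-t1); rewrite ?V1; repeat split; try lra; rewrite Ev; f_equal; lra ]. Qed.
Lemma ne2 C x y : D_ne (refl2 C) x y = D_se C x (1-y).
Proof. unfold D_ne, D_se. apply Rinf_ext; intro v; split;
  [ intros (s1 & s2 & t1 & t2 & Hr & E1 & E2 & Ev); rewrite V2 in Ev
  | intros (s1 & s2 & t1 & t2 & Hr & E1 & E2 & Ev) ];
  unfold is_rect in *;
  first
  [ exists (1-s2), (1-s1), t1, t2; rewrite ?V2; repeat split; try lra; rewrite Ev; f_equal; lra
  | exists s1, s2, (1-t2), (1-t1); rewrite ?V2; repeat split; try lra; rewrite Ev; f_equal; lra ]. Qed.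
Lemma sw2 C x y : D_sw (refl2 C) x y = D_nw C x (1-y).
Proof. unfold D_sw, D_nw. apply Rinf_ext; intro v; split;
  [ intros (s1 & s2 & t1 & t2 & Hr & E1 & E2 & Ev); rewrite V2 in Ev
  | intros (s1 & s2 & t1 & t2 & Hr & E1 & E2 & Ev) ];
  unfold is_rect in *;
  first
  [ exists (1-s2), (1-s1), t1, t2; rewrite ?V2; repeat split; try lra; rewrite Ev; f_equal; lra
  | exists s1, s2, (1-t2), (1-t1); rewrite ?V2; repeat split; try lra; rewrite Ev; f_equal; lra ]. Qed.
Lemma nw2 C x y : D_nw (refl2 C) x y = D_sw C x (1-y).
Proof. unfold D_nw, D_sw. apply Rinf_ext; intro v; split;
  [ intros (s1 & s2 & t1 & t2 & Hr & E1 & E2 & Ev); rewrite V2 in Ev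
  | intros (s1 & s2 & t1 & t2 & Hr & E1 & E2 & Ev) ];
  unfold is_rect in *;
  first
  [ exists (1-s2), (1-s1), t1, t2; rewrite ?V2; repeat split; try lra; rewrite Ev; f_equal; lra
  | exists s1, s2, (1-t2), (1-t1); rewrite ?V2; repeat split; try lra; rewrite Ev; f_equal; lra ]. Qed.
Lemma se2 C x y : D_se (refl2 C) x y = D_ne C x (1-y).
Proof. unfold D_se, D_ne. apply Rinf_ext; intro v; split;
  [ intros (s1 & s2 & t1 & t2 & Hr & E1 & E2 & Ev); rewrite V2 in Ev
  | intros (s1 & s2 & t1 & t2 & Hr & E1 & E2 & Ev) ];
  unfold is_rect in *;
  first
  [ exists (1-s2), (1-s1), t1, t2; rewrite ?V2; repeat split; try lra; rewrite Ev; f_equal; lra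
  | exists s1, s2, (1-t2), (1-t1); rewrite ?V2; repeat split; try lra; rewrite Ev; f_equal; lra ]. Qed.

Theorem mainTheorem6 (C : R -> R -> R) (sigma : (R -> R -> R) -> (R -> R -> R)) :
  quasi_copula C ->
  (sigma = refl1 \/ sigma = refl2) ->
  (forall x y, in01 x -> in01 y ->
     Q_M (sigma C) x y = sigma (Q_O C) x y) /\
  (forall x y, in01 x -> in01 y ->
     Q_O (sigma C) x y = sigma (Q_M C) x y).
Proof.
  intros _ [-> | ->]; split; intros x y _ _;
  unfold Q_M, Q_O, D_M, D_O.
  - rewrite ne1, sw1. unfold refl1. ring.
  - rewrite nw1, se1. unfold refl1. ring.
  - rewrite ne2, sw2, Rmin_comm. unfold refl2. ring.
  - rewrite nw2, se2, Rmin_comm. unfold refl2. ring.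
Qed.
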